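(* Let $q$ be a prime power with $q\equiv2\pmod 3$, let $m,n$ be positive integers, let $\omega\in\mathbb{F}_{q^2}$ be an element of multiplicative order $3$, and let $\varepsilon\in\mathbb{F}_q^*\cup\{\pm\omega,\pm\omega^2\}$. Put $f(x)=(x+\omega x^q)^m+\varepsilon(\omega x+x^q)^n$. Then: (i) if $\varepsilon\in\mathbb{F}_q^*$, $f$ permutes $\mathbb{F}_{q^2}$ if and only if $\gcd(mn,q-1)=1$ and $3\nmid(m-n)$; (ii) if $\varepsilon=\pm\omega$, $f$ permutes $\mathbb{F}_{q^2}$ if and only if $\gcd(mn,q-1)=1$ and $3\nmid(1+m-n)$; (iii) if $\varepsilon=\pm\omega^2$, $f$ permutes $\mathbb{F}_{q^2}$ if and only if $\gcd(mn,q-1)=1$ and $3\nmid(2+m-n)$.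
   Context: $f$ permutes $\mathbb{F}_{q^2}$ means the map $x\mapsto f(x)$ on $\mathbb{F}_{q^2}$ is bijective. *)

(* Defs.v *)
From HB Require Import structures.
From mathcomp Require Import all_boot all_order all_algebra all_field.
Set Implicit Arguments. Unset Strict Implicit. Unset Printing Implicit Defensive.
Import GRing.Theory.
Local Open Scope ring_scope.

Definition prime_power (q : nat) : Prop :=
  exists p k : nat, [/\ prime p, (0 < k)%N & q = (p ^ k)%N].

Definition fmap (F : fieldType) (q m n : nat) (w eps : F) (x : F) : F :=
  (x + w * x ^+ q) ^+ m + eps * (w * x + x ^+ q) ^+ n.

Definition permutes (F : Type) (f : F -> F) : Prop := bijective f.

(* Main.v *)
Require Import Defs.
From HB Require Import structures.
From mathcomp Require Import all_boot all_order all_algebra all_field all_fingroup all_solvable.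
From mathcomp Require Import zify ring.
Import GRing.Theory FinRing.Theory.
Local Open Scope ring_scope.

Section Aux.
Variable F : finFieldType.
Variables (q : nat) (w : F).
Hypothesis frobD : forall x y : F, (x + y) ^+ q = x ^+ q + y ^+ q.
Hypothesis qq : forall x : F, x ^+ q ^+ q = x.
Hypothesis wq : w ^+ q = w ^+ 2.
Hypothesis w3 : w ^+ 3 = 1.
Hypothesis w1 : w != 1.
Hypothesis q1 : (1 < q)%N.

Lemma frob0 : (0 : F) ^+ q = 0.
Proof. by rewrite expr0n; case: q q1. Qed.

Lemma frobN (x : F) : (- x) ^+ q = - x ^+ q.
Proof.
by apply/eqP; rewrite -subr_eq0 opprK -frobD addNr frob0.
Qed.

Lemma frobB (x y : F) : (x - y) ^+ q = x ^+ q - y ^+ q.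
Proof. by rewrite frobD frobN. Qed.

Lemma w4 : w ^+ 4 = w.
Proof. by rewrite (exprS w 3) w3 mulr1. Qed.

Lemma w5 : w ^+ 5 = w ^+ 2.
Proof. by rewrite (exprD w 3 2) w3 mul1r. Qed.

Lemma w6 : w ^+ 6 = 1.
Proof. by rewrite (exprD w 3 3) w3 mul1r. Qed.

Lemma w0 : w != 0.
Proof. by apply/eqP => h; move: w3; rewrite h expr0n /= => /eqP; rewrite eq_sym oner_eq0. Qed.

Lemma wsum : 1 + w + w ^+ 2 = 0.
Proof.
have : (w - 1) * (1 + w + w ^+ 2) = 0.
  have e : (w - 1) * (1 + w + w ^+ 2) = w ^+ 3 - 1 by ring.
  by rewrite e w3 subrr.
by move/eqP; rewrite mulf_eq0 subr_eq0 (negbTE w1) => /eqP.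
Qed.

Lemma three0 : (3 : F) != 0.
Proof.
apply/eqP => h; move/eqP: w1; apply.
have : (w - 1) ^+ 2 = 0.
  have -> : (w - 1) ^+ 2 = (1 + w + w ^+ 2) - 3 * w by ring.
  by rewrite wsum h mul0r subr0.
by move/eqP; rewrite expf_eq0 /= subr_eq0 => /eqP.
Qed.

Definition T (u : F) := u + u ^+ q.
Definition a x := T (w * x).
Definition b x := T (w ^+ 2 * x).

Lemma TK u : T u ^+ q = T u.
Proof. by rewrite /T frobD qq addrC. Qed.

Lemma TZ k u : k ^+ q = k -> T (k * u) = k * T u.
Proof. by move=> hk; rewrite /T exprMn hk mulrDr. Qed.

Lemma wqq : (w ^+ 2) ^+ q = w.
Proof. by rewrite exprAC wq -exprM w4. Qed.

Lemma fm_ab m n eps x : fmap q m n w eps x =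
   (w ^+ 2) ^+ m * a x ^+ m + eps * (w ^+ 2) ^+ n * b x ^+ n.
Proof.
rewrite /fmap /a /b /T [(w * x) ^+ q]exprMn [(w ^+ 2 * x) ^+ q]exprMn wq wqq -mulrA -!exprMn.
have -> : w ^+ 2 * (w * x + w ^+ 2 * x ^+ q) = x + w * x ^+ q.
  have -> : w ^+ 2 * (w * x + w ^+ 2 * x ^+ q) = w ^+ 3 * x + w ^+ 4 * x ^+ q by ring.
  by rewrite w3 w4 mul1r.
have -> : w ^+ 2 * (w ^+ 2 * x + w * x ^+ q) = w * x + x ^+ q => //.
have -> : w ^+ 2 * (w ^+ 2 * x + w * x ^+ q) = w ^+ 4 * x + w ^+ 3 * x ^+ q by ring.
by rewrite w3 w4 mul1r.
Qed.

Lemma aE x : a x = w * x + w ^+ 2 * x ^+ q.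
Proof. by rewrite /a /T [(w * x) ^+ q]exprMn wq. Qed.

Lemma bE x : b x = w ^+ 2 * x + w * x ^+ q.
Proof. by rewrite /b /T [(w ^+ 2 * x) ^+ q]exprMn wqq. Qed.

Lemma x_ab x : (w - 1) * x = a x - w * b x.
Proof.
rewrite aE bE.
have -> : w * x + w ^+ 2 * x ^+ q - w * (w ^+ 2 * x + w * x ^+ q) = w * x - w ^+ 3 * x by ring.
rewrite w3; ring.
Qed.

Lemma ab_inj x y : a x = a y -> b x = b y -> x = y.
Proof.
move=> ha hb; apply: (mulfI (_ : w - 1 != 0)); first by rewrite subr_eq0.
by rewrite !x_ab ha hb.
Qed.

Definition u0 : F := 1 - w ^+ 2.
Definition v0 : F := 1 - w.

Lemma b_u0 : b u0 = 0.
Proof.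
rewrite bE /u0 frobB expr1n exprAC wq -exprM w4.
have -> : w ^+ 2 * (1 - w ^+ 2) + w * (1 - w) = w ^+ 2 + w - (w ^+ 4 + w ^+ 2) by ring.
by rewrite w4; ring.
Qed.

Lemma a_u0 : a u0 = - 3.
Proof.
rewrite aE /u0 frobB expr1n exprAC wq -exprM w4.
have -> : w * (1 - w ^+ 2) + w ^+ 2 * (1 - w) = (1 + w + w ^+ 2) - 1 - 2 * w ^+ 3 by ring.
by rewrite wsum w3; ring.
Qed.

Lemma a_v0 : a v0 = 0.
Proof.
rewrite aE /v0 frobB expr1n wq.
have -> : w * (1 - w) + w ^+ 2 * (1 - w ^+ 2) = w - w ^+ 4 by ring.
by rewrite w4 subrr.
Qed.

Lemma b_v0 : b v0 = - 3.
Proof.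
rewrite bE /v0 frobB expr1n wq.
have -> : w ^+ 2 * (1 - w) + w * (1 - w ^+ 2) = (1 + w + w ^+ 2) - 1 - 2 * w ^+ 3 by ring.
by rewrite wsum w3; ring.
Qed.


Lemma aZ k x : k ^+ q = k -> a (k * x) = k * a x.
Proof. by move=> hk; rewrite /a mulrCA (TZ _ _ hk). Qed.

Lemma bZ k x : k ^+ q = k -> b (k * x) = k * b x.
Proof. by move=> hk; rewrite /b mulrCA (TZ _ _ hk). Qed.

Lemma a0 : a 0 = 0.
Proof. by rewrite /a /T mulr0 frob0 addr0. Qed.
Lemma b0 : b 0 = 0.
Proof. by rewrite /b /T mulr0 frob0 addr0. Qed.

Lemma u0_neq0 : u0 != 0.
Proof. by apply/eqP => h; move: a_u0; rewrite h a0 => /eqP; rewrite eq_sym oppr_eq0 (negbTE three0). Qed.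
Lemma v0_neq0 : v0 != 0.
Proof. by apply/eqP => h; move: b_v0; rewrite h b0 => /eqP; rewrite eq_sym oppr_eq0 (negbTE three0). Qed.

Lemma KX (k : F) m : k ^+ q = k -> (k ^+ m) ^+ q = k ^+ m.
Proof. by move=> hk; rewrite exprAC hk. Qed.

Definition injK m := forall k l : F, k ^+ q = k -> l ^+ q = l -> k ^+ m = l ^+ m -> k = l.

Lemma main_inj (al be : F) m n : al != 0 -> (0 < m)%N -> (0 < n)%N ->
  injective (fun x => al * a x ^+ m + be * b x ^+ n) <->
  [/\ injK m, injK n & (be / al) ^+ q != be / al].
Proof.
move=> al0 m0 n0; split.
  move=> hinj; split.
  - move=> k1 l1 hk hl hkl; apply: (mulIf u0_neq0); apply: hinj => /=.
    by rewrite !aZ // !bZ // b_u0 !mulr0 !expr0n /= !exprMn hkl.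
  - move=> k1 l1 hk hl hkl; apply: (mulIf v0_neq0); apply: hinj => /=.
    by rewrite !aZ // !bZ // a_v0 !mulr0 !expr0n /= !exprMn hkl.
  apply/negP => /eqP hc.
  case: (injF_bij hinj) => g' _ hg'.
  set x := g' (al * w).
  have hx := hg' (al * w); rewrite -/x /= in hx.
  have e : al * (a x ^+ m + be / al * b x ^+ n) = al * w.
    by rewrite -hx mulrDr mulrA mulrCA mulfV // mulr1.
  have := mulfI al0 e => {}e.
  have : w ^+ q = w.
    by rewrite -e frobD exprMn hc !KX ?TK.
  rewrite wq => /eqP; rewrite -[X in _ == X]mulr1 expr2 (inj_eq (mulfI w0)).
  by rewrite (negbTE w1).
case=> hm hn hc x y /= h.
have hB : b x ^+ n = b y ^+ n.
  apply/eqP; apply/negP => /negP hB; move/negP: hc; apply.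
  have e : be * (b y ^+ n - b x ^+ n) = al * (a x ^+ m - a y ^+ m).
    have e : be * (b y ^+ n - b x ^+ n) - al * (a x ^+ m - a y ^+ m) =
      (al * a y ^+ m + be * b y ^+ n) - (al * a x ^+ m + be * b x ^+ n) by ring.
    by move: e; rewrite h subrr => /eqP; rewrite subr_eq0 => /eqP.
  have -> : be / al = (a x ^+ m - a y ^+ m) / (b y ^+ n - b x ^+ n).
    apply/eqP; rewrite eqr_div //; last by rewrite subr_eq0 eq_sym.
    by rewrite e mulrC.
  by rewrite exprMn exprVn !frobB !KX ?TK.
have hA : a x ^+ m = a y ^+ m.
  by apply: (mulfI al0); apply: (addIr (be * b x ^+ n)); rewrite h hB.
by apply: ab_inj; [apply: hm | apply: hn]; rewrite ?TK.
Qed.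

End Aux.

Lemma powK {F : finFieldType} {q : nat} {k : F} v : (0 < q)%N -> k ^+ q = k ->
  k ^+ (v * (q - 1) + 1) = k.
Proof.
move=> q0 hk; elim: v => [|v IH]; first by rewrite mul0n add0n expr1.
have -> : (v.+1 * (q - 1) + 1 = v * (q - 1) + q)%N.
  by rewrite mulSn addnAC addnC subnK.
by rewrite exprD hk -(exprD k _ 1%N) IH.
Qed.

Lemma injK_coprime (F : finFieldType) (q m : nat) :
  #|F| = (q * q)%N -> (1 < q)%N -> (0 < m)%N ->
  injK F q m <-> coprime m (q - 1).
Proof.
move=> cardF q1 m0; split; last first.
  move=> cop k l hk hl hkl.
  case: (egcdnP (q - 1) m0) => km kn e _.
  move: cop; rewrite /coprime => /eqP g1; rewrite g1 in e.
  have q0 : (0 < q)%N by apply: ltnW.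
  by rewrite -(powK kn q0 hk) -(powK kn q0 hl) -e mulnC !exprM hkl.
move=> hinj; apply: contraT => ncop.
have d1 : (1 < gcdn m (q - 1))%N.
  by rewrite ltn_neqAle eq_sym ncop /= gcdn_gt0 m0.
set p := pdiv (gcdn m (q - 1)).
have pp : prime p by apply: pdiv_prime.
have pm : (p %| m)%N by apply: dvdn_trans (pdiv_dvd _) (dvdn_gcdl _ _).
have pq : (p %| q - 1)%N by apply: dvdn_trans (pdiv_dvd _) (dvdn_gcdr _ _).
have pG : (p %| #|[set: {unit F}]%G|)%N.
  rewrite card_finField_unit cardF.
  have -> : (q * q).-1 = ((q - 1) * (q + 1))%N.
    by rewrite mulnBl mul1n mulnDr muln1 -subn1 subnDA addnK.
  by apply: dvdn_mulr.
case: (Cauchy pp pG) => g _ og.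
have gX j : (p %| j)%N -> val g ^+ j = 1.
  by move=> pj; rewrite -val_unitX; move: pj; rewrite -og order_dvdn => /eqP ->.
have g1 : val g != 1.
  apply/eqP => h; have : (1 < #[g]%g)%N by rewrite og prime_gt1.
  by rewrite order_gt1; apply/negP; rewrite negbK; apply/eqP/val_inj.
have hk : val g ^+ q = val g.
  by rewrite -(subnK (ltnW q1)) exprD gX // mul1r expr1.
have : val g = 1 by apply: hinj => //; [exact: expr1n | rewrite gX // expr1n].
by move/eqP; rewrite (negbTE g1).
Qed.

Lemma cond (F : finFieldType) q (w s : F) m n j : w ^+ q = w ^+ 2 -> 3.-primitive_root w ->
  s != 0 -> s ^+ q = s ->
  (((s * w ^+ j) * (w ^+ 2) ^+ n / (w ^+ 2) ^+ m) ^+ q ==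
     (s * w ^+ j) * (w ^+ 2) ^+ n / (w ^+ 2) ^+ m) =
  (2 * (j + 2 * n) + 2 * m == j + 2 * n + 2 * (2 * m) %[mod 3])%N.
Proof.
move=> wq wp s0 hs.
have w0 : w != 0.
  by apply/eqP => h; move: (prim_expr_order wp); rewrite h expr0n /= => /eqP; rewrite eq_sym oner_eq0.
have e1 : s * w ^+ j * (w ^+ 2) ^+ n / (w ^+ 2) ^+ m = s * w ^+ (j + 2 * n) / w ^+ (2 * m).
  by rewrite -!exprM exprD mulrA.
rewrite e1 exprMn exprVn exprMn hs exprAC wq -exprM [(w ^+ (2 * m)) ^+ q]exprAC wq -exprM.
rewrite eqr_div ?expf_neq0 // -!mulrA (inj_eq (mulfI s0)) -!exprD.
exact: eq_prim_root_expr.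
Qed.

Theorem proposition3p6 (F : finFieldType) (q m n : nat) (w eps : F) :
  prime_power q -> #|F| = (q ^ 2)%N -> (q %% 3 = 2)%N ->
  (0 < m)%N -> (0 < n)%N ->
  3.-primitive_root w ->
  [/\ (eps != 0 /\ eps ^+ q = eps) ->
        (permutes (fmap q m n w eps) <->
         coprime (m * n) (q - 1) /\ ~~ (3 %| (m%:Z - n%:Z))%Z),
      (eps = w \/ eps = - w) ->
        (permutes (fmap q m n w eps) <->
         coprime (m * n) (q - 1) /\ ~~ (3 %| (1 + m%:Z - n%:Z))%Z)
    & (eps = w ^+ 2 \/ eps = - w ^+ 2) ->
        (permutes (fmap q m n w eps) <->
         coprime (m * n) (q - 1) /\ ~~ (3 %| (2 + m%:Z - n%:Z))%Z)].
Proof.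
move=> [p [k [pp k0 hq]]] cardF q3 m0 n0 wp.
have q1 : (1 < q)%N by lia.
have cardF' : #|F| = (q * q)%N by rewrite cardF mulnn.
have charp : p \in [pchar F].
  by apply: (card_finPcharP (n := (k * 2)%N)) => //; rewrite cardF hq -expnM.
have frobD : forall x y : F, (x + y) ^+ q = x ^+ q + y ^+ q.
  by move=> x y; apply: exprDn_pchar; rewrite hq pnatX pnatE // charp.
have qq : forall x : F, x ^+ q ^+ q = x by move=> x; rewrite -exprM -cardF' expf_card.
have wq : w ^+ q = w ^+ 2 by rewrite -(prim_expr_mod wp) q3.
have w3 : w ^+ 3 = 1 := prim_expr_order wp.
have w1 : w != 1 by have := eq_prim_root_expr wp 1 0; rewrite expr1 expr0 => ->.
have al0 : (w ^+ 2) ^+ m != 0.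
  rewrite !expf_neq0 //; apply/eqP => h; move: w3; rewrite h expr0n /= => /eqP.
  by rewrite eq_sym oner_eq0.
have key : forall s j, s != 0 -> s ^+ q = s ->
   (permutes (fmap q m n w (s * w ^+ j)) <->
    [/\ coprime m (q - 1), coprime n (q - 1) &
       ~~ (2 * (j + 2 * n) + 2 * m == j + 2 * n + 2 * (2 * m) %[mod 3])%N]).
  move=> s j s0 hs.
  have E := fm_ab _ _ _ wq w3 m n (s * w ^+ j).
  rewrite -(cond _ _ _ _ m n j wq wp s0 hs).
  have MI := main_inj _ _ _ frobD qq wq w3 w1 q1 ((w ^+ 2) ^+ m) (s * w ^+ j * (w ^+ 2) ^+ n) m n al0 m0 n0.
  have C1 := injK_coprime _ _ _ cardF' q1 m0.
  have C2 := injK_coprime _ _ _ cardF' q1 n0.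
  split.
    move=> /bij_inj hi.
    have : injective (fun x => (w ^+ 2) ^+ m * a F q w x ^+ m +
             s * w ^+ j * (w ^+ 2) ^+ n * b F q w x ^+ n).
      by move=> x y; rewrite -!E; apply: hi.
    by move/MI => [/C1 h1 /C2 h2 h3].
  case=> /C1 h1 /C2 h2 h3; apply: injF_bij => x y; rewrite !E.
  by apply: (proj2 MI); split.
have sN : forall s : F, s ^+ q = s -> (- s) ^+ q = - s.
  by move=> s hs; rewrite (frobN _ _ frobD q1) hs.
have s1 : (1 : F) ^+ q = 1 by rewrite expr1n.
split.
- case=> e0 eq.
  have := key eps 0%N e0 eq; rewrite expr0 mulr1 => ->.
  rewrite coprimeMl; split.
    by case=> -> -> h /=; split => //; move: h; apply: contra => h; lia.
  by case=> /andP [-> ->] h; split => //; move: h; apply: contra => h; lia.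
- move=> he.
  have [s [s0 hs es]] : exists s : F, [/\ s != 0, s ^+ q = s & eps = s * w ^+ 1].
    case: he => ->; [exists 1 | exists (-1)]; rewrite ?oppr_eq0 ?oner_eq0 ?sN ?expr1 ?mul1r ?mulN1r //.
  rewrite es (key s 1%N s0 hs) coprimeMl; split.
    by case=> -> -> h /=; split => //; move: h; apply: contra => h; lia.
  by case=> /andP [-> ->] h; split => //; move: h; apply: contra => h; lia.
- move=> he.
  have [s [s0 hs es]] : exists s : F, [/\ s != 0, s ^+ q = s & eps = s * w ^+ 2].
    case: he => ->; [exists 1 | exists (-1)]; rewrite ?oppr_eq0 ?oner_eq0 ?sN ?mul1r ?mulN1r //.
  rewrite es (key s 2%N s0 hs) coprimeMl; split.
    by case=> -> -> h /=; split => //; move: h; apply: contra => h; lia.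
  by case=> /andP [-> ->] h; split => //; move: h; apply: contra => h; lia.
Qed.
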